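(* Let $n, q$ be positive integers, let $\mathcal{A} = \langle V, V_0, V_1, E\rangle$ be an arena (over some set of colors $C$) with $n$ nodes, let $\preceq$ be any total preorder on $V$, and let $S_1$ be a $q$-state strategy of Player 0 in $\mathcal{A}$. Then there exists a chromatic $(qn+1)^n$-state strategy $S_2$ of Player 0 in $\mathcal{A}$ such that for every $v\in V$, \[\mathsf{col}(S_2, v) \subseteq \bigcup_{u\in V,\ v\preceq u} \mathsf{col}(S_1, u).\]
   Context: An arena over a set of colors $C$ is a tuple $\mathcal{A} = \langle V, V_0, V_1, E\rangle$ of finite sets with $V = V_0 \sqcup V_1$, $E \subseteq V \times C \times V$, and every node having at least one outgoing edge; for $e=(s,c,t)$ write $\mathsf{source}(e)=s$, $\mathsf{col}(e)=c$, $\mathsf{target}(e)=t$. A path is a nonempty finite or infinite sequence of edges $e_1e_2\ldots$ with $\mathsf{target}(e_i)=\mathsf{source}(e_{i+1})$; for each node $v$ there is also a $0$-length path $\lambda_v$ with source and target $v$. $\mathsf{col}$ extends letterwise to sequences of edges. A strategy of Player 0 is a function $S$ assigning to each finite path $p$ with $\mathsf{target}(p)\in V_0$ an edge $S(p)$ with $\mathsf{source}(S(p))=\mathsf{target}(p)$. A path $p=e_1e_2\ldots$ is consistent with $S$ if (when $\mathsf{source}(p)\in V_0$) $e_1=S(\lambda_{\mathsf{source}(p)})$ and for each $1\le i<|p|$ with $\mathsf{target}(e_i)\in V_0$ we have $e_{i+1}=S(e_1\ldots e_i)$. For $v\in V$, $\mathsf{col}(S,v)\subseteq C^\omega$ is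 the set of $\mathsf{col}(p)$ over all infinite paths $p$ from $v$ consistent with $S$. A memory structure is $\mathcal{M}=\langle M, m_{init},\delta\rangle$ with $M$ finite, $m_{init}\in M$, $\delta: M\times E\to M$ (extended to finite edge sequences in the usual way). $S$ is an $\mathcal{M}$-strategy if for all finite paths $p_1,p_2$ with $\mathsf{target}(p_1)=\mathsf{target}(p_2)\in V_0$, $\delta(m_{init},p_1)=\delta(m_{init},p_2)$ implies $S(p_1)=S(p_2)$. $\mathcal{M}$ is chromatic if there is $\sigma: M\times C\to M$ with $\delta(m,e)=\sigma(m,\mathsf{col}(e))$ for all $m,e$. A (chromatic) $q$-state strategy is an $\mathcal{M}$-strategy for some (chromatic) memory structure $\mathcal{M}$ with $|M|=q$. *)

(* Defs.v *)
From mathcomp Require Import all_boot.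
From Stdlib Require List.

Set Implicit Arguments.
Unset Strict Implicit.
Unset Printing Implicit Defensive.

Definition edge (V : finType) (C : Type) := (V * C * V)%type.
Definition esrc {V : finType} {C : Type} (e : edge V C) : V := e.1.1.
Definition ecol {V : finType} {C : Type} (e : edge V C) : C := e.1.2.
Definition etgt {V : finType} {C : Type} (e : edge V C) : V := e.2.

(* Arena <V, V0, V1, E> over colours C: V is a finite type, V0 : pred V is
   the set of Player-0 nodes (V1 is its complement), E is a finite set of
   edges (a predicate contained in some finite list), every node has an
   outgoing edge. *)
Record arena (V : finType) (C : Type) := Arena {
  V0 : pred V;
  E : edge V C -> Prop;
  E_finite : exists s : seq (edge V C), forall e, E e -> List.In e s;
  E_total : forall v : V, exists e, E e /\ esrc e = v
}.

Section Games.
Variables (V : finType) (C : Type) (A : arena V C).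

(* A finite path is given by its source node v and its list of edges p;
   the empty list is the 0-length path lambda_v. *)
Fixpoint fpath (v : V) (p : seq (edge V C)) : Prop :=
  match p with
  | [::] => True
  | e :: p' => E A e /\ esrc e = v /\ fpath (etgt e) p'
  end.

Definition ptarget (v : V) (p : seq (edge V C)) : V := last v (map etgt p).

Definition is_strategy (S : V -> seq (edge V C) -> edge V C) : Prop :=
  forall v p, fpath v p -> ptarget v p \in V0 A ->
    E A (S v p) /\ esrc (S v p) = ptarget v p.

Definition ipath (v : V) (rho : nat -> edge V C) : Prop :=
  (forall i, E A (rho i)) /\ esrc (rho 0) = v /\
  (forall i, etgt (rho i) = esrc (rho i.+1)).

Definition iconsistent (S : V -> seq (edge V C) -> edge V C) (v : V)
  (rho : nat -> edge V C) : Prop :=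
  forall i, ptarget v (mkseq rho i) \in V0 A -> rho i = S v (mkseq rho i).

Definition colS (S : V -> seq (edge V C) -> edge V C) (v : V)
  (w : nat -> C) : Prop :=
  exists rho, ipath v rho /\ iconsistent S v rho /\
    forall i, w i = ecol (rho i).

(* Memory structures M = <M, m_init, delta>; delta extended to finite
   sequences of edges by left folding. *)
Definition mem_update (M : finType) (delta : M -> edge V C -> M)
  (m : M) (p : seq (edge V C)) : M := foldl delta m p.

Definition is_M_strategy (M : finType) (minit : M) (delta : M -> edge V C -> M)
  (S : V -> seq (edge V C) -> edge V C) : Prop :=
  forall v1 p1 v2 p2, fpath v1 p1 -> fpath v2 p2 ->
    ptarget v1 p1 = ptarget v2 p2 -> ptarget v1 p1 \in V0 A ->
    mem_update delta minit p1 = mem_update delta minit p2 ->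
    S v1 p1 = S v2 p2.

Definition chromatic (M : finType) (delta : M -> edge V C -> M) : Prop :=
  exists sigma : M -> C -> M, forall m e, E A e -> delta m e = sigma m (ecol e).

Definition q_state (q : nat) (S : V -> seq (edge V C) -> edge V C) : Prop :=
  is_strategy S /\
  exists (M : finType) (minit : M) (delta : M -> edge V C -> M),
    #|M| = q /\ is_M_strategy minit delta S.

Definition chromatic_q_state (q : nat) (S : V -> seq (edge V C) -> edge V C)
  : Prop :=
  is_strategy S /\
  exists (M : finType) (minit : M) (delta : M -> edge V C -> M),
    #|M| = q /\ chromatic delta /\ is_M_strategy minit delta S.

End Games.

Definition total_preorder (T : Type) (le : T -> T -> Prop) : Prop :=
  (forall x, le x x) /\ (forall x y z, le x y -> le y z -> le x z) /\
  (forall x y, le x y \/ le y x).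

(* Main.v *)
Require Import Defs.
From mathcomp Require Import all_boot.
From Stdlib Require ClassicalEpsilon Classical.

Set Implicit Arguments.
Unset Strict Implicit.
Unset Printing Implicit Defensive.

Notation fpath := Defs.fpath.
Notation classic := Classical_Prop.classic.
Notation epsilon := ClassicalEpsilon.epsilon.
Notation epsilon_spec := ClassicalEpsilon.epsilon_spec.

Lemma list_bound (T : Type) (s : seq T) (Q : T -> nat -> Prop) :
  (forall x k k', k <= k' -> Q x k -> Q x k') ->
  (forall x, List.In x s -> exists k, Q x k) ->
  exists K, forall x, List.In x s -> Q x K.
Proof.
move=> Qup; elim: s => [|x s IH] H; first by exists 0.
have [K HK] : exists K, forall y, List.In y s -> Q y K.
  by apply: IH => y Hy; apply: H; right.
have [k Hk] := H x (or_introl erefl).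
exists (maxn K k) => y [<-|Hy].
  by apply: Qup Hk; apply: leq_maxr.
by apply: Qup (HK y Hy); apply: leq_maxl.
Qed.

Lemma in_In (T : eqType) (s : seq T) x : x \in s -> List.In x s.
Proof.
elim: s => [//|y s IH]; rewrite in_cons => /orP [/eqP ->|/IH]; by [left|right].
Qed.

Section Proof.
Variables (V : finType) (C : Type) (A : arena V C).
Variable le : V -> V -> Prop.
Hypothesis Hle : total_preorder le.

Lemma max_exists (s : seq V) (P : V -> Prop) :
  (exists x, x \in s /\ P x) -> exists u, P u /\ forall x, x \in s -> P x -> le x u.
Proof.
case: Hle => Hrefl [Htr Htot].
elim: s => [[x []]//|x s IH] Hex.
case: (classic (exists y, y \in s /\ P y)) => [/IH [u [Pu Hu]]|Hno].
  case: (classic (P x)) => Px.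
    case: (Htot x u) => Hxu.
      exists u; split=> // y; rewrite in_cons => /orP [/eqP ->//|]; exact: Hu.
    exists x; split=> // y; rewrite in_cons => /orP [/eqP ->//|ys Py].
    exact: Htr (Hu y ys Py) Hxu.
  exists u; split=> // y; rewrite in_cons => /orP [/eqP -> //|]; exact: Hu.
case: Hex => y [ys Py]; move: ys; rewrite in_cons => /orP [/eqP Eyx|ys];
  last by exfalso; apply: Hno; exists y.
subst y; exists x; split=> // z; rewrite in_cons => /orP [/eqP ->//|zs Pz].
by exfalso; apply: Hno; exists z.
Qed.

Lemma fpath_rcons v h e :
  fpath A v (rcons h e) <-> fpath A v h /\ E A e /\ esrc e = ptarget v h.
Proof.
elim: h v => [|e' h IH] v /=; first by rewrite /ptarget /=; tauto.
rewrite IH /ptarget /=; tauto.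
Qed.

Lemma fpath_cat v h1 h2 : fpath A v (h1 ++ h2) -> fpath A v h1.
Proof. by elim: h1 v => [//|e h IH] v /= [? [? /IH]]. Qed.

Lemma ptarget_rcons (v : V) (h : seq (edge V C)) e : ptarget v (rcons h e) = etgt e.
Proof. by rewrite /ptarget map_rcons last_rcons. Qed.

Lemma ptarget_cons (v : V) (e : edge V C) h : ptarget v (e :: h) = ptarget (etgt e) h.
Proof. by []. Qed.

Variable S1 : V -> seq (edge V C) -> edge V C.

Fixpoint consF (u : V) (pre h : seq (edge V C)) : Prop :=
  match h with
  | [::] => True
  | e :: h' => (ptarget u pre \in V0 A -> e = S1 u pre) /\ consF u (rcons pre e) h'
  end.

Lemma consF_rcons u pre h e :
  consF u pre (rcons h e) <->
  consF u pre h /\ (ptarget u (pre ++ h) \in V0 A -> e = S1 u (pre ++ h)).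
Proof.
elim: h pre => [|e' h IH] pre /=; first by rewrite cats0; tauto.
by rewrite IH -cats1 -catA cat1s; tauto.
Qed.

Lemma consF_cat u pre h1 h2 : consF u pre (h1 ++ h2) -> consF u pre h1.
Proof. by elim: h1 pre => [//|e h IH] pre /= [? /IH]. Qed.

Fixpoint colOK (w : nat -> C) (k : nat) (h : seq (edge V C)) : Prop :=
  match h with
  | [::] => True
  | e :: h' => ecol e = w k /\ colOK w k.+1 h'
  end.

Lemma colOK_rcons w k h e :
  colOK w k (rcons h e) <-> colOK w k h /\ ecol e = w (k + size h).
Proof.
elim: h k => [|e' h IH] k /=; first by rewrite addn0; tauto.
by rewrite IH addnS; tauto.
Qed.

Lemma colOK_cat w k h1 h2 : colOK w k (h1 ++ h2) -> colOK w k h1.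
Proof. by elim: h1 k => [//|e h IH] k /= [? /IH]. Qed.

Definition G w u h := fpath A u h /\ consF u [::] h /\ colOK w 0 h.

Lemma G_cat w u h1 h2 : G w u (h1 ++ h2) -> G w u h1.
Proof.
by case=> [/fpath_cat ? [/consF_cat ? /colOK_cat ?]].
Qed.

Definition Good w u h := forall k, exists h', size h' = k /\ G w u (h ++ h').

Lemma Good_step w u h : Good w u h -> exists e, Good w u (rcons h e).
Proof.
move=> Hg; apply: Classical_Prop.NNPP => Hno.
have Hall : forall e, exists k, forall h', k <= size h' -> ~ G w u (rcons h e ++ h').
  move=> e; apply: Classical_Prop.NNPP => Hn; apply: Hno; exists e => k.
  apply: Classical_Prop.NNPP => Hk; apply: Hn; exists k => h' Hsz Gh.
  apply: Hk; exists (take k h'); split; first by rewrite size_take_min; exact/minn_idPl.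
  by move: Gh; rewrite -{1}(cat_take_drop k h') catA => /G_cat.
case: (E_finite A) => s Hs.
have [K HK] : exists K, forall e, List.In e s ->
    forall h', K <= size h' -> ~ G w u (rcons h e ++ h').
  apply: (@list_bound _ s (fun e k => forall h', k <= size h' -> ~ G w u (rcons h e ++ h'))).
    by move=> x k k' Hkk' Hq h' Hsz; apply: Hq; apply: leq_trans Hkk' Hsz.
  by move=> x _; apply: Hall.
case: (Hg K.+1) => [[|e h'] [//= [Hsz]] Gh].
have HE : E A e.
  by move: Gh; rewrite -cat_rcons => -[/fpath_cat /fpath_rcons [_ []]].
apply: (HK e (Hs e HE) h'); first by rewrite Hsz.
by rewrite cat_rcons.
Qed.


Lemma Good_G w u h : Good w u h -> G w u h.
Proof. by move=> H; case: (H 0) => h' [/size0nil ->]; rewrite cats0. Qed.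

Lemma koenig w u (inh : inhabited (edge V C)) :
  Good w u [::] -> exists rho, forall k, G w u (mkseq rho k).
Proof.
move=> G0.
pose nxt h := epsilon inh (fun e => Good w u (rcons h e)).
pose hs := fix hs k := match k with 0 => [::] | k'.+1 => rcons (hs k') (nxt (hs k')) end.
exists (fun k => nxt (hs k)).
suff H : forall k, hs k = mkseq (fun k => nxt (hs k)) k /\ Good w u (hs k).
  by move=> k; case: (H k) => <- /Good_G.
elim=> [|k [IH1 IH2]] /=; first by [].
split; first by rewrite mkseqS IH1.
by apply: (epsilon_spec inh (fun e => Good w u (rcons (hs k) e))); apply: Good_step.
Qed.

Lemma G_to_path w u rho : (forall k, G w u (mkseq rho k)) ->
  ipath A u rho /\ iconsistent A S1 u rho /\ forall i, w i = ecol (rho i).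
Proof.
move=> HG; split; [split; [|split]|split].
- move=> i; case: (HG i.+1); rewrite mkseqS => /fpath_rcons [_ []] //.
- by case: (HG 1); rewrite mkseqS => /fpath_rcons [_ [_ ->]].
- move=> i; case: (HG i.+2); rewrite mkseqS => /fpath_rcons [_ [_ ->]].
  by rewrite mkseqS ptarget_rcons.
- move=> i; case: (HG i.+1) => _ []; rewrite mkseqS => /consF_rcons [_ H] _.
  by move=> Hv; apply: H.
- move=> i; case: (HG i.+1) => _ [_]; rewrite mkseqS => /colOK_rcons [_ ->].
  by rewrite size_mkseq.
Qed.

Variables (M1 : finType) (minit : M1) (delta1 : M1 -> edge V C -> M1).
Hypothesis HS1 : is_strategy A S1.
Hypothesis HM1 : is_M_strategy A minit delta1 S1.

Definition mem1 h := foldl delta1 minit h.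

Definition Wit (t : V) (m : M1) (p : V * seq (edge V C)) :=
  fpath A p.1 p.2 /\ ptarget p.1 p.2 = t /\ mem1 p.2 = m.

Lemma inh_edge (t : V) : inhabited (edge V C).
Proof. by case: (E_total A t) => e _; constructor. Qed.

Definition chP m t e := E A e /\ esrc e = t /\
  (t \in V0 A -> forall u h, Wit t m (u, h) -> e = S1 u h).

Definition ch m t := epsilon (inh_edge t) (chP m t).

Lemma ch_spec m t : chP m t (ch m t).
Proof.
apply: epsilon_spec.
case: (classic (t \in V0 A /\ exists u h, Wit t m (u, h))) => [[Ht [u [h [Hf [Hp Hm]]]]]|Hno].
  have [HE Hs] : E A (S1 u h) /\ esrc (S1 u h) = ptarget u h.
    by apply: HS1 => //; rewrite Hp.
  exists (S1 u h); split=> //; split; first by rewrite Hs.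
  move=> _ u' h' [Hf' [Hp' Hm']]; apply: HM1 => //; first by rewrite Hp Hp'.
    by rewrite Hp.
  by rewrite /mem_update; move: Hm Hm'; rewrite /mem1 => -> ->.
case: (E_total A t) => e [HE Hs]; exists e; split=> //; split=> // Ht u h W.
by exfalso; apply: Hno; split=> //; exists u, h.
Qed.

Local Notation Mem2 := {ffun V -> option (M1 * V)}.

Definition Cand (f : Mem2) (c : C) (y' : V) (m' : M1) (u : V) : Prop :=
  exists y m e, f y = Some (m, u) /\ E A e /\ esrc e = y /\ etgt e = y' /\
    ecol e = c /\ (y \in V0 A -> e = ch m y) /\ m' = delta1 m e.

Definition Best (f : Mem2) (c : C) (y' : V) (o : option (M1 * V)) : Prop :=
  match o with
  | Some (m', u) => Cand f c y' m' u /\ forall m'' u'', Cand f c y' m'' u'' -> le u'' u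
  | None => forall m u, ~ Cand f c y' m u
  end.

Lemma Best_ex f c y' : exists o, Best f c y' o.
Proof.
case: (classic (exists m u, Cand f c y' m u)) => [[m [u Hc]]|Hno].
  have [u' [[m' Hc'] Hmax]] := @max_exists (enum V) (fun u => exists m, Cand f c y' m u)
    (ex_intro _ u (conj (mem_enum V u) (ex_intro _ m Hc))).
  exists (Some (m', u')); split=> // m'' u'' H.
  by apply: Hmax; [rewrite mem_enum | exists m''].
by exists None => m u H; apply: Hno; exists m, u.
Qed.

Definition sigma2 (f : Mem2) (c : C) : Mem2 :=
  [ffun y' => epsilon (inhabits None) (Best f c y')].

Definition delta2 (f : Mem2) (e : edge V C) : Mem2 := sigma2 f (ecol e).

Definition finit : Mem2 := [ffun y => Some (minit, y)].

Definition mpart (o : option (M1 * V)) : M1 := if o is Some (m, _) then m else minit.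

Definition S2 (v : V) (p : seq (edge V C)) : edge V C :=
  ch (mpart (foldl delta2 finit p (ptarget v p))) (ptarget v p).

Lemma S2_chrom : chromatic_q_state A ((#|M1| * #|V| + 1) ^ #|V|) S2.
Proof.
split.
  move=> v p _ _; case: (ch_spec (mpart (foldl delta2 finit p (ptarget v p))) (ptarget v p)).
  by move=> HE [Hs _].
exists Mem2, finit, delta2; split.
  by rewrite card_ffun card_option card_prod addn1.
split; first by exists sigma2.
move=> v1 p1 v2 p2 _ _ Ht _ Hm.
by rewrite /S2 -Ht; move: Hm; rewrite /mem_update => ->.
Qed.

Section Inv.
Variables (v : V) (rho : nat -> edge V C).
Hypothesis Hip : ipath A v rho.
Hypothesis Hic : iconsistent A S2 v rho.
Let w i := ecol (rho i).

Definition Valid k y m u := exists h, size h = k /\ G w u h /\ ptarget u h = y /\ mem1 h = m.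
Definition fk k := foldl delta2 finit (mkseq rho k).

Lemma tk k : ptarget v (mkseq rho k) = esrc (rho k).
Proof.
case: Hip => _ [H0 Hst].
elim: k => [|k IH]; first by rewrite H0.
by rewrite mkseqS ptarget_rcons Hst.
Qed.

Lemma inv k : (forall y m u, fk k y = Some (m, u) -> Valid k y m u) /\
  exists m u, fk k (esrc (rho k)) = Some (m, u) /\ le v u.
Proof.
case: Hip => HE [H0 Hst].
case: Hle => Hrefl [Htr _].
elim: k => [|k [IH1 [m [u [Hf Hu]]]]].
  split.
    move=> y m u; rewrite /fk /= ffunE => -[<- <-]; exists [::]; by repeat split.
  by exists minit, v; rewrite /fk /= ffunE H0.
have Efk : fk k.+1 = sigma2 (fk k) (w k) by rewrite /fk mkseqS foldl_rcons.
have HB : forall y', Best (fk k) (w k) y' (fk k.+1 y').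
  by move=> y'; rewrite Efk ffunE; apply: epsilon_spec; apply: Best_ex.
split.
  move=> y' m' u' Hy'.
  have := HB y'; rewrite Hy' => -[[y [m0 [e [Hfy [HEe [Hs [Ht [Hc [Hch ->]]]]]]]]] _].
  case: (IH1 _ _ _ Hfy) => h [Hsz [[Hfp [Hcons Hcol]] [Hpt Hmem]]].
  exists (rcons h e); split; first by rewrite size_rcons Hsz.
  split; [split; [|split]|split].
  - by apply/fpath_rcons; split=> //; split=> //; rewrite Hs Hpt.
  - apply/consF_rcons; split=> //; rewrite cat0s Hpt => Hv.
    rewrite (Hch Hv); case: (ch_spec m0 y) => _ [_ H]; by apply: (H Hv u' h).
  - by apply/colOK_rcons; split=> //; rewrite Hc add0n Hsz.
  - by rewrite ptarget_rcons.
  - by rewrite /mem1 foldl_rcons -/(mem1 h) Hmem.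
have Hc : Cand (fk k) (w k) (esrc (rho k.+1)) (delta1 m (rho k)) u.
  exists (esrc (rho k)), m, (rho k); split=> //; split=> //; split=> //.
  split; first exact: Hst.
  split=> //; split=> // Hv.
  have := @Hic k; rewrite tk => /(_ Hv) Hrk.
  by rewrite {1}Hrk /S2 tk; move: Hf; rewrite /fk => ->.
have := HB (esrc (rho k.+1)).
set o := fk k.+1 (esrc (rho k.+1)).
case: o => [[m'' u'']|] /=.
  by move=> [_ Hmax]; exists m'', u''; split=> //; apply: Htr Hu (Hmax _ _ Hc).
by move=> H; exfalso; apply: H Hc.
Qed.

Lemma good_exists : exists u, le v u /\ Good w u [::].
Proof.
apply: Classical_Prop.NNPP => Hno.
have Hall : forall u, exists k, (fun u k => le v u -> forall h, k <= size h -> ~ G w u h) u k.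
  move=> u; case: (classic (le v u)) => Hvu; last by exists 0.
  apply: Classical_Prop.NNPP => Hn; apply: Hno; exists u; split=> // k.
  apply: Classical_Prop.NNPP => Hk; apply: Hn; exists k => _ h Hsz Gh.
  apply: Hk; exists (take k h); split; first by rewrite size_take_min; exact/minn_idPl.
  by move: Gh; rewrite -{1}(cat_take_drop k h) => /G_cat.
have [K HK] := @list_bound _ (enum V) (fun u k => le v u -> forall h, k <= size h -> ~ G w u h)
  (fun x k k' Hkk' Hq Hvx h Hsz => Hq Hvx h (leq_trans Hkk' Hsz)) (fun x _ => Hall x).
case: (inv K) => H1 [m [u [Hf Hu]]].
case: (H1 _ _ _ Hf) => h [Hsz [Gh _]].
by apply: (HK u (in_In (mem_enum V u)) Hu h); [rewrite Hsz|].
Qed.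

End Inv.

Lemma S2_col v w0 : colS A S2 v w0 -> exists u, le v u /\ colS A S1 u w0.
Proof.
case=> rho [Hip [Hic Hw]].
have [u [Hvu Hg]] := good_exists Hip Hic.
have [rho' Hr] := koenig (inh_edge u) Hg.
have [Hip' [Hic' Hw']] := G_to_path Hr.
exists u; split=> //; exists rho'; split=> //; split=> // i.
by rewrite Hw -Hw'.
Qed.

End Proof.

Theorem theorem2 (n q : nat) (V : finType) (C : Type) (A : arena V C)
  (le : V -> V -> Prop) (S1 : V -> seq (edge V C) -> edge V C) :
  0 < n -> 0 < q -> #|V| = n ->
  total_preorder le ->
  q_state A q S1 ->
  exists S2 : V -> seq (edge V C) -> edge V C,
    chromatic_q_state A ((q * n + 1) ^ n) S2 /\
    forall (v : V) (w : nat -> C),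
      colS A S2 v w -> exists u : V, le v u /\ colS A S1 u w.
Proof.
move=> _ _ HV Hle [HS1 [M1 [minit [delta1 [Hcard HM]]]]].
exists (S2 A le S1 minit delta1); split.
  by rewrite -Hcard -HV; exact: (S2_chrom le HS1 HM).
by move=> v w; apply: (S2_col Hle HS1 HM).
Qed.
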